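(* Let $N\ge5$. Define $s(r)=\left((N-2)\int_r^\infty(\sinh\sigma)^{1-N}d\sigma\right)^{-\frac{1}{N-2}}$ for $r>0$, let $r=r(s)$ be its inverse and $\rho(s)=\left(\frac{\sinh r(s)}{s}\right)^{2(N-1)}$. If $A\in\mathbb{R}$ is such that $$\int_0^\infty\frac{1}{\rho(s)}(\Delta v)^2s^{N-1}ds\ge\frac{(N-1)^4}{16}\int_0^\infty\rho(s)v^2s^{N-1}ds+A\int_0^\infty\frac{\rho(s)}{r^2(s)}v^2s^{N-1}ds$$ for every $v\in C_c^\infty(0,\infty)$, where $\Delta v=v''+\frac{N-1}{s}v'$, then $A\le\frac{(N-1)^2}{8}$. *)

(* Defs.v *)
From Stdlib Require Import Reals ClassicalEpsilon.
From Coquelicot Require Import Coquelicot.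
Open Scope R_scope.

Definition s_of_r (N : nat) (r : R) : R :=
  Rpower ((INR N - 2) *
          RInt_gen (fun sigma => / (sinh sigma ^ (N - 1)))
                   (at_point r) (Rbar_locally p_infty))
         (- (1 / (INR N - 2))).

Definition r_of_s (N : nat) (s : R) : R :=
  epsilon (inhabits 0) (fun r => 0 < r /\ s_of_r N r = s).

Definition rho (N : nat) (s : R) : R := (sinh (r_of_s N s) / s) ^ (2 * (N - 1)).

Definition radial_lap (N : nat) (v : R -> R) (s : R) : R :=
  Derive_n v 2 s + (INR N - 1) / s * Derive v s.

Definition smooth_cc_pos (v : R -> R) : Prop :=
  (forall (k : nat) (x : R), ex_derive (Derive_n v k) x) /\
  (exists a b : R, 0 < a /\ a < b /\ forall x, (x < a \/ b < x) -> v x = 0).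

Definition int_0_oo (f : R -> R) : R :=
  RInt_gen f (at_right 0) (Rbar_locally p_infty).

(* Main.v *)
Require Import Defs.
From Stdlib Require Import Reals Lra Lia List.
From Coquelicot Require Import Coquelicot.
Open Scope R_scope.

Definition Dn (n : nat) (U : R -> Prop) (f : R -> R) : Prop :=
  forall k, (k < n)%nat -> forall x, U x -> ex_derive (Derive_n f k) x.
Definition Sm (U : R -> Prop) (f : R -> R) := forall n, Dn n U f.
Definition opn (U : R -> Prop) := forall x, U x -> locally x U.

Lemma Dn_le n m U f : (m <= n)%nat -> Dn n U f -> Dn m U f.
Proof. intros H D k Hk; apply D; lia. Qed.

Lemma loc_eq U (f g : R -> R) x : opn U -> (forall y, U y -> f y = g y) -> U x ->
  locally x (fun t => f t = g t).
Proof.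
  intros HU He Hx. destruct (HU x Hx) as [e He'].
  exists e. intros y Hy. apply He. apply He'. exact Hy.
Qed.

Lemma Dn_ext n U f g : opn U -> (forall y, U y -> f y = g y) -> Dn n U f -> Dn n U g.
Proof.
  intros HU He D k Hk x Hx.
  apply ex_derive_ext_loc with (Derive_n f k).
  - destruct (HU x Hx) as [e He'].
    exists e. intros y Hy. apply Derive_n_ext_loc.
    apply loc_eq with U; auto.
  - apply D; auto.
Qed.

Lemma Derive_n_Derive' f k : Derive_n (Derive f) k = Derive_n f (S k).
Proof.
  induction k; simpl. reflexivity. rewrite IHk. reflexivity.
Qed.

Lemma DnS n U f : Dn (S n) U f <-> ((forall x, U x -> ex_derive f x) /\ Dn n U (Derive f)).
Proof.
  split.
  - intros D. split.
    + intros x Hx. apply (D 0%nat); auto; lia.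
    + intros k Hk x Hx. rewrite Derive_n_Derive'. apply D; auto; lia.
  - intros [H1 H2] k Hk x Hx. destruct k. apply H1; auto.
    rewrite <- Derive_n_Derive'. apply H2; auto; lia.
Qed.

Lemma Dn_0 U f : Dn 0 U f.
Proof. intros k Hk; lia. Qed.

Lemma Dn_const n U c : opn U -> Dn n U (fun _ => c).
Proof.
  intros HU. revert c. induction n; intros c. apply Dn_0.
  apply DnS. split. intros; apply ex_derive_const.
  apply Dn_ext with (fun _ => 0). auto. intros; rewrite Derive_const; auto. apply IHn.
Qed.

Lemma Dn_id n U : opn U -> Dn n U (fun x => x).
Proof.
  intros HU. destruct n. apply Dn_0. apply DnS. split. intros; apply ex_derive_id.
  apply Dn_ext with (fun _ => 1). auto. intros; rewrite Derive_id; auto. apply Dn_const; auto.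
Qed.

Lemma Dn_plus n U f g : opn U -> Dn n U f -> Dn n U g -> Dn n U (fun x => f x + g x).
Proof.
  intros HU. revert f g. induction n; intros f g Df Dg. apply Dn_0.
  apply DnS in Df as [Df1 Df2]. apply DnS in Dg as [Dg1 Dg2].
  apply DnS. split. intros; apply (ex_derive_plus f g); auto.
  apply Dn_ext with (fun x => Derive f x + Derive g x). auto.
  intros; rewrite Derive_plus; auto. apply IHn; auto.
Qed.

Lemma Dn_mult n U f g : opn U -> Dn n U f -> Dn n U g -> Dn n U (fun x => f x * g x).
Proof.
  intros HU. revert f g. induction n; intros f g Df Dg. apply Dn_0.
  assert (Df' := Df); assert (Dg' := Dg).
  apply DnS in Df as [Df1 Df2]. apply DnS in Dg as [Dg1 Dg2].
  apply DnS. split. intros; apply (ex_derive_mult f g); auto.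
  apply Dn_ext with (fun x => Derive f x * g x + f x * Derive g x). auto.
  intros; rewrite Derive_mult; auto. apply Dn_plus; auto; apply IHn; auto;
  apply Dn_le with (S n); auto.
Qed.

Lemma Dn_scal n U k f : opn U -> Dn n U f -> Dn n U (fun x => k * f x).
Proof. intros; apply Dn_mult; auto; apply Dn_const; auto. Qed.

Lemma Dn_opp n U f : opn U -> Dn n U f -> Dn n U (fun x => - f x).
Proof. intros. apply Dn_ext with (fun x => -1 * f x). auto. intros; ring. apply Dn_scal; auto. Qed.

Lemma Dn_minus n U f g : opn U -> Dn n U f -> Dn n U g -> Dn n U (fun x => f x - g x).
Proof. intros. apply Dn_plus; auto. apply Dn_opp; auto. Qed.

Lemma Dn_comp n U V f g : opn U -> opn V -> (forall x, U x -> V (g x)) ->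
  Dn n V f -> Dn n U g -> Dn n U (fun x => f (g x)).
Proof.
  intros HU HV Hm. revert f g Hm. induction n; intros f g Hm Df Dg. apply Dn_0.
  assert (Dg' := Dg).
  apply DnS in Df as [Df1 Df2]. apply DnS in Dg as [Dg1 Dg2].
  apply DnS. split. intros; apply (ex_derive_comp f g); auto.
  apply Dn_ext with (fun x => Derive g x * Derive f (g x)). auto.
  intros; symmetry; apply Derive_comp; auto. apply Dn_mult; auto.
  apply IHn; auto. apply Dn_le with (S n); auto.
Qed.

Lemma Dn_pow n U f k : opn U -> Dn n U f -> Dn n U (fun x => f x ^ k).
Proof.
  intros HU Df. induction k. simpl. apply Dn_const; auto.
  simpl. apply Dn_mult; auto.
Qed.

Lemma Dn_cont n k U f x : opn U -> Dn n U f -> (k < n)%nat -> U x -> continuous (Derive_n f k) x.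
Proof. intros HU D Hk Hx. apply (ex_derive_continuous (Derive_n f k)). apply D; auto. Qed.

Lemma Sm_exp U : opn U -> Sm U exp.
Proof.
  intros HU n. induction n. apply Dn_0.
  apply DnS. split. intros; apply ex_derive_Reals_1; apply derivable_pt_exp.
  apply Dn_ext with exp; auto. intros. symmetry. apply is_derive_unique.
  apply is_derive_Reals. apply derivable_pt_lim_exp.
Qed.

Lemma Sm_sinh_cosh U : opn U -> forall n, Dn n U sinh /\ Dn n U cosh.
Proof.
  intros HU n. induction n. split; apply Dn_0.
  destruct IHn as [H1 H2]. split; apply DnS; split.
  - intros; apply ex_derive_Reals_1; apply derivable_pt_sinh.
  - apply Dn_ext with cosh; auto. intros. symmetry. apply is_derive_unique.
    apply is_derive_Reals. apply derivable_pt_lim_sinh.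
  - intros; apply ex_derive_Reals_1; apply derivable_pt_cosh.
  - apply Dn_ext with sinh; auto. intros. symmetry. apply is_derive_unique.
    apply is_derive_Reals. apply derivable_pt_lim_cosh.
Qed.

Definition Rpos (x : R) : Prop := 0 < x.

Lemma opn_Rpos : opn Rpos.
Proof.
  intros x Hx. unfold Rpos in *. exists (mkposreal x Hx). intros y Hy.
  unfold ball in Hy; simpl in Hy. unfold AbsRing_ball, abs, minus, plus, opp in Hy; simpl in Hy.
  apply Rabs_lt_between in Hy. lra.
Qed.

Lemma Sm_inv : Sm Rpos (fun x => / x).
Proof.
  intros n. induction n. apply Dn_0.
  apply DnS. split. intros x Hx. apply ex_derive_Reals_1. apply derivable_pt_inv.
  unfold Rpos in Hx; lra. apply derivable_pt_id.
  apply Dn_ext with (fun x => - (/ x * / x)). apply opn_Rpos.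
  intros y Hy. symmetry. apply is_derive_unique. unfold Rpos in Hy.
  auto_derive. lra. field. lra.
  apply Dn_opp. apply opn_Rpos. apply Dn_mult; auto. apply opn_Rpos.
Qed.

Lemma Sm_ln : Sm Rpos ln.
Proof.
  intros n. destruct n. apply Dn_0.
  apply DnS. split. intros x Hx. unfold Rpos in Hx. exists (/x). apply is_derive_Reals.
  apply derivable_pt_lim_ln; auto.
  apply Dn_ext with (fun x => / x). apply opn_Rpos.
  intros y Hy. symmetry. apply is_derive_unique. unfold Rpos in Hy.
  apply is_derive_Reals; apply derivable_pt_lim_ln; auto. apply Sm_inv.
Qed.

Open Scope list_scope. Open Scope R_scope.

Fixpoint peval (l : list R) (y : R) : R :=
  match l with nil => 0 | c :: t => c + y * peval t y end.
Fixpoint padd (a b : list R) : list R :=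
  match a, b with nil, _ => b | _, nil => a | x :: a', y :: b' => (x + y) :: padd a' b' end.
Lemma padd_ok a b y : peval (padd a b) y = peval a y + peval b y.
Proof.
  revert b; induction a; intros b; simpl. ring. destruct b; simpl. ring.
  rewrite IHa. ring.
Qed.
Definition pscal (k : R) (a : list R) := map (fun c => k * c) a.
Lemma pscal_ok k a y : peval (pscal k a) y = k * peval a y.
Proof. induction a; simpl. ring. rewrite IHa. ring. Qed.

Definition IsPoly (p : R -> R) := exists l, forall y, p y = peval l y.

Lemma peval_der l : exists l', forall y, is_derive (peval l) y (peval l' y).
Proof.
  induction l. exists nil. intros y. simpl. auto_derive; auto.
  destruct IHl as [l' H]. exists (padd l (0 :: l')). intros y. simpl.
  rewrite padd_ok. simpl.
  apply is_derive_ext with (fun t => a + t * peval l t). intros; reflexivity.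
  auto_derive. exists (peval l' y); apply H.
  replace (Derive (fun x => peval l x) y) with (peval l' y) by (symmetry; apply is_derive_unique; apply H). ring.
Qed.

Lemma poly_der p : IsPoly p -> exists q, IsPoly q /\ forall y, is_derive p y (q y).
Proof.
  intros [l Hl]. destruct (peval_der l) as [l' H]. exists (peval l'). split.
  exists l'; auto. intros y. apply is_derive_ext with (peval l). intros; auto. apply H.
Qed.

Lemma peval_bound l : exists C n, forall y, 1 <= y -> Rabs (peval l y) <= C * y ^ n.
Proof.
  induction l. exists 0, O. intros; simpl. rewrite Rabs_R0; lra.
  destruct IHl as [C [n H]]. exists (Rabs a + Rabs C), (S n). intros y Hy. simpl.
  assert (H1 := H y Hy). assert (1 <= y ^ n) by (apply pow_R1_Rle; lra).
  eapply Rle_trans. apply Rabs_triang. rewrite Rabs_mult.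
  rewrite (Rabs_right y) by lra.
  assert (C <= Rabs C) by apply RRle_abs.
  assert (0 <= Rabs a) by apply Rabs_pos.
  assert (Rabs (peval l y) <= Rabs C * y ^ n).
  { eapply Rle_trans. apply H1. apply Rmult_le_compat_r. lra. auto. }
  assert (y * Rabs (peval l y) <= y * (Rabs C * y ^ n)) by (apply Rmult_le_compat_l; lra).
  assert (Rabs a <= Rabs a * (y * y ^ n)).
  { rewrite <- (Rmult_1_r (Rabs a)) at 1. apply Rmult_le_compat_l; auto. nra. }
  nra.
Qed.

Lemma exp_pow_nat a M : exp (INR M * a) = exp a ^ M.
Proof.
  induction M. simpl. rewrite Rmult_0_l, exp_0; auto.
  rewrite S_INR. replace ((INR M + 1) * a) with (INR M * a + a) by ring.
  rewrite exp_plus, IHM. simpl; ring.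
Qed.

Lemma exp_ge_pow y M : 0 <= y -> (0 < M)%nat -> (y / INR M) ^ M <= exp y.
Proof.
  intros Hy HM. assert (0 < INR M) by (apply lt_0_INR; auto).
  replace y with (INR M * (y / INR M)) at 2 by (field; lra).
  rewrite exp_pow_nat. apply pow_incr. split. apply Rdiv_le_0_compat; lra.
  destruct (Req_dec (y / INR M) 0) as [E|E]. rewrite E, exp_0; lra.
  assert (1 + y / INR M < exp (y / INR M)) by (apply exp_ineq1; auto). lra.
Qed.

Definition gfun (p : R -> R) (x : R) : R :=
  if Rle_dec x 0 then 0 else p (/ x) * exp (- / x).

Lemma gfun_bound p : IsPoly p -> exists K, forall h, Rabs h <= 1 -> Rabs (gfun p h) <= K * h ^ 2.
Proof.
  intros [l Hl]. destruct (peval_bound l) as [C [n H]].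
  set (M := (n + 2)%nat).
  exists (Rabs C * INR M ^ M). intros h Hh. unfold gfun.
  destruct (Rle_dec h 0). rewrite Rabs_R0. apply Rmult_le_pos.
  apply Rmult_le_pos. apply Rabs_pos. apply pow_le; apply pos_INR. apply pow2_ge_0.
  assert (hp : 0 < h) by lra. clear n0.
  set (y := / h). assert (Hy1 : 1 <= y). { unfold y. rewrite Rabs_right in Hh by lra.
    rewrite <- Rinv_1. apply Rinv_le_contravar; lra. }
  assert (hy : h = / y) by (unfold y; rewrite Rinv_inv; auto). rewrite hy. 
  rewrite Rabs_mult. rewrite (Rabs_right (exp _)) by (apply Rle_ge, Rlt_le, exp_pos).
  rewrite Hl. assert (B := H y Hy1).
  assert (HM : (0 < M)%nat) by (unfold M; lia).
  assert (E := exp_ge_pow y M ltac:(lra) HM).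
  assert (INRM : 0 < INR M) by (apply lt_0_INR; auto).
  assert (ypos : 0 < y) by lra.
  assert (eq1 : (y / INR M) ^ M = y ^ M / INR M ^ M).
  { unfold Rdiv. rewrite Rpow_mult_distr. rewrite pow_inv. reflexivity. }
  rewrite eq1 in E.
  assert (e1 : exp (- y) = / exp y) by apply exp_Ropp. rewrite e1.
  assert (Hn : y ^ M = y ^ n * y ^ 2) by (unfold M; rewrite pow_add; ring).
  assert (ynpos : 0 < y ^ n) by (apply pow_lt; lra).
  assert (ey : 0 < exp y) by apply exp_pos.
  assert (IM : 0 < INR M ^ M) by (apply pow_lt; lra).
  (* |p| * /exp y <= C y^n * INR M^M / y^M = C INR M^M / y^2 *)
  assert (Hc : 0 <= Rabs C) by apply Rabs_pos.
  assert (B' : Rabs (peval l y) <= Rabs C * y ^ n) by (eapply Rle_trans; [apply B| apply Rmult_le_compat_r; [lra| apply RRle_abs]]).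
  apply Rle_trans with (Rabs C * y ^ n * / exp y).
  apply Rmult_le_compat_r. left; apply Rinv_0_lt_compat; auto. auto.
  assert (/ exp y <= INR M ^ M / y ^ M).
  { rewrite <- (Rinv_div (y^M)). apply Rinv_le_contravar. apply Rdiv_lt_0_compat; auto.
    apply pow_lt; lra. auto. }
  rewrite Hn in H0. rewrite pow_inv.
  apply Rle_trans with (Rabs C * y ^ n * (INR M ^ M / (y ^ n * y ^ 2))).
  apply Rmult_le_compat_l; auto. apply Rmult_le_pos; lra.
  right. field. repeat split; try apply pow_nonzero; lra.
Qed.

Lemma locally_pos x : 0 < x -> locally x (fun t => 0 < t).
Proof.
  intros Hx. exists (mkposreal x Hx). intros y Hy.
  unfold ball in Hy; simpl in Hy. unfold AbsRing_ball, abs, minus, plus, opp in Hy; simpl in Hy.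
  apply Rabs_lt_between in Hy. lra.
Qed.
Lemma locally_neg x : x < 0 -> locally x (fun t => t < 0).
Proof.
  intros Hx. assert (0 < - x) by lra. exists (mkposreal (-x) H). intros y Hy.
  unfold ball in Hy; simpl in Hy. unfold AbsRing_ball, abs, minus, plus, opp in Hy; simpl in Hy.
  apply Rabs_lt_between in Hy. lra.
Qed.

Lemma gfun_der p : IsPoly p -> exists q, IsPoly q /\ forall x, is_derive (gfun p) x (gfun q x).
Proof.
  intros Hp. destruct (poly_der p Hp) as [p' [Hp' Hd]].
  destruct Hp as [lp Hlp]. destruct Hp' as [lp' Hlp'].
  exists (fun y => y * (y * (p y + -1 * p' y))). split.
  { exists (0 :: 0 :: padd lp (pscal (-1) lp')). intros y. simpl.
    rewrite padd_ok, pscal_ok, Hlp, Hlp'. ring. }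
  intros x. destruct (Rtotal_order x 0) as [Hx|[Hx|Hx]].
  - unfold gfun at 2. destruct (Rle_dec x 0); [|lra].
    apply is_derive_ext_loc with (fun _ => 0).
    apply filter_imp with (2 := locally_neg x Hx). intros t Ht. unfold gfun.
    destruct (Rle_dec t 0); auto; lra.
    auto_derive; auto.
  - subst x. unfold gfun at 2. destruct (Rle_dec 0 0); [|lra].
    destruct (gfun_bound p (ex_intro _ lp Hlp)) as [K HK].
    apply is_derive_Reals. intros eps Heps.
    assert (Kp : 0 <= K). { assert (H1 := HK 1 ltac:(rewrite Rabs_R1; lra)).
      assert (0 <= Rabs (gfun p 1)) by apply Rabs_pos. simpl in H1. lra. }
    assert (dpos : 0 < Rmin 1 (eps / (K + 1))). { apply Rmin_pos. lra. apply Rdiv_lt_0_compat; lra. }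
    exists (mkposreal _ dpos). intros h Hh0 Hh. simpl in Hh.
    assert (h1 : Rabs h <= 1) by (assert (Rmin 1 (eps/(K+1)) <= 1) by apply Rmin_l; lra).
    assert (h2 : Rabs h < eps / (K + 1)) by (assert (Rmin 1 (eps/(K+1)) <= eps/(K+1)) by apply Rmin_r; lra).
    replace (gfun p (0 + h)) with (gfun p h) by (f_equal; ring).
    assert (g0 : gfun p 0 = 0) by (unfold gfun; destruct (Rle_dec 0 0); lra).
    rewrite g0. replace ((gfun p h - 0) / h - 0) with (gfun p h / h) by (field; auto).
    unfold Rdiv. rewrite Rabs_mult. rewrite Rabs_inv.
    assert (B := HK h h1). assert (ah : 0 < Rabs h) by (apply Rabs_pos_lt; auto).
    assert (h^2 = Rabs h * Rabs h) by (rewrite <- Rabs_mult; simpl; rewrite Rmult_1_r; rewrite Rabs_right; [ring| apply Rle_ge; nra]).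
    apply Rle_lt_trans with (K * Rabs h).
    apply Rmult_le_reg_r with (Rabs h); auto. rewrite (Rmult_assoc (Rabs (gfun p h))), Rinv_l by lra. nra.
    apply Rle_lt_trans with (K * (eps / (K + 1))). nra.
    assert (eps / (K+1) * (K+1) = eps) by (field; lra). nra.
  - unfold gfun at 2. destruct (Rle_dec x 0); [lra|].
    apply is_derive_ext_loc with (fun t => p (/ t) * exp (- / t)).
    apply filter_imp with (2 := locally_pos x Hx). intros t Ht. unfold gfun.
    destruct (Rle_dec t 0); auto; lra.
    auto_derive. split. exists (p' (/ x)); apply Hd. split; auto. lra.
    split; [lra|auto].
    replace (Derive (fun x0 => p x0) (/ x)) with (p' (/ x)) by (symmetry; apply is_derive_unique; apply Hd).
    field. lra.
Qed.

Definition f0 := gfun (fun _ => 1).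

Lemma f0_Derive_n k : exists p, IsPoly p /\ forall x, Derive_n f0 k x = gfun p x.
Proof.
  induction k. exists (fun _ => 1). split. exists (1 :: nil). intros; simpl; ring.
  intros; reflexivity.
  destruct IHk as [p [Hp He]]. destruct (gfun_der p Hp) as [q [Hq Hd]].
  exists q. split; auto. intros x. simpl.
  rewrite (Derive_ext _ _ x He). apply is_derive_unique. apply Hd.
Qed.

Lemma Sm_f0 U : Sm U f0.
Proof.
  intros n k Hk x Hx. destruct (f0_Derive_n k) as [p [Hp He]].
  destruct (gfun_der p Hp) as [q [Hq Hd]].
  apply ex_derive_ext with (gfun p). intros; auto. exists (gfun q x). apply Hd.
Qed.

Lemma f0_pos x : 0 < x -> f0 x = exp (- / x).
Proof. intros. unfold f0, gfun. destruct (Rle_dec x 0); [lra| ring]. Qed.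
Lemma f0_zero x : x <= 0 -> f0 x = 0.
Proof. intros. unfold f0, gfun. destruct (Rle_dec x 0); [auto| lra]. Qed.

Definition psi (x : R) : R := f0 (x - 1) * f0 (2 - x).

Lemma Sm_psi U : opn U -> Sm U psi.
Proof.
  intros HU n. unfold psi. apply Dn_mult; auto.
  - apply Dn_comp with (fun _ => True); auto. intros y _. exists (mkposreal 1 Rlt_0_1). auto.
    apply Sm_f0. apply Dn_plus; auto. apply Dn_id; auto. apply Dn_const; auto.
  - apply Dn_comp with (fun _ => True); auto. intros y _. exists (mkposreal 1 Rlt_0_1). auto.
    apply Sm_f0. apply Dn_minus; auto. apply Dn_const; auto. apply Dn_id; auto.
Qed.

Lemma psi_zero x : x <= 1 \/ 2 <= x -> psi x = 0.
Proof.
  intros [H|H]; unfold psi. rewrite (f0_zero (x-1)) by lra; ring.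
  rewrite (f0_zero (2-x)) by lra; ring.
Qed.

Lemma psi_pos x : 1 < x < 2 -> 0 < psi x.
Proof.
  intros H; unfold psi. rewrite !f0_pos by lra. apply Rmult_lt_0_compat; apply exp_pos.
Qed.

Close Scope list_scope. Open Scope R_scope.

Definition fN (N : nat) (s : R) : R := / (sinh s ^ (N - 1)).

Lemma sinh_pos x : 0 < x -> 0 < sinh x.
Proof. intros H. rewrite <- sinh_0. apply sinh_lt; auto. Qed.

Lemma fN_pos N x : 0 < x -> 0 < fN N x.
Proof. intros H. unfold fN. apply Rinv_0_lt_compat. apply pow_lt. apply sinh_pos; auto. Qed.

Lemma fN_der N x : 0 < x -> ex_derive (fN N) x.
Proof.
  intros H. unfold fN. assert (0 < sinh x) by (apply sinh_pos; auto).
  unfold sinh in *. auto_derive. apply pow_nonzero. lra.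
Qed.

Lemma fN_cont N x : 0 < x -> continuous (fN N) x.
Proof. intros H. apply (ex_derive_continuous (fN N)). apply fN_der; auto. Qed.

Lemma fN_exRInt N a b : 0 < a -> 0 < b -> ex_RInt (fN N) a b.
Proof.
  intros Ha Hb. apply (ex_RInt_continuous (V:=R_CompleteNormedModule)). intros z Hz. apply fN_cont.
  assert (Rmin a b > 0) by (apply Rmin_glb_lt; auto). lra.
Qed.

Lemma sinh_ge x : 1 <= x -> exp x / 4 <= sinh x.
Proof.
  intros H. unfold sinh. assert (exp (- x) <= exp x / 2).
  { rewrite exp_Ropp. assert (0 < exp x) by apply exp_pos.
    assert (2 <= exp x * exp x).
    { rewrite <- exp_plus. assert (1 + (x+x) < exp (x+x)) by (apply exp_ineq1; lra). lra. }
    apply Rmult_le_reg_r with (exp x); auto. rewrite Rinv_l by lra. nra. }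
  lra.
Qed.

Lemma fN_bound N x : (2 <= N)%nat -> 4 <= x -> fN N x <= 4 * exp (- x).
Proof.
  intros HN Hx. unfold fN. assert (S1 := sinh_ge x ltac:(lra)).
  assert (e5 : 5 <= exp x) by (assert (1 + x < exp x) by (apply exp_ineq1; lra); lra).
  assert (1 <= sinh x) by lra.
  assert (sinh x <= sinh x ^ (N - 1)).
  { replace (N - 1)%nat with (S (N - 2)) by lia. simpl.
    assert (1 <= sinh x ^ (N - 2)) by (apply pow_R1_Rle; lra). nra. }
  rewrite exp_Ropp. assert (0 < exp x) by apply exp_pos.
  apply Rle_trans with (/ sinh x). apply Rinv_le_contravar; lra.
  apply Rle_trans with (/ (exp x / 4)). apply Rinv_le_contravar. lra. lra.
  right. field. lra.
Qed.

Lemma RInt_exp_neg a b : is_RInt (fun x => 4 * exp (- x)) a b (4 * exp (- a) - 4 * exp (- b)).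
Proof.
  replace (4 * exp (- a) - 4 * exp (- b)) with (minus ((fun x => - 4 * exp (- x)) b) ((fun x => - 4 * exp (- x)) a)).
  2: unfold minus, plus, opp; simpl; ring.
  apply (is_RInt_derive (V:=R_CompleteNormedModule) (fun x => - 4 * exp (- x))). intros x _. auto_derive; auto. ring.
  intros x _. apply (ex_derive_continuous (fun x => 4 * exp (- x))). auto_derive; auto.
Qed.

Lemma fN_tail N a b : (2 <= N)%nat -> 4 <= a -> a <= b -> 0 <= RInt (fN N) a b <= 4 * exp (- a).
Proof.
  intros HN Ha Hab. split.
  - apply RInt_ge_0; auto. apply fN_exRInt; lra. intros x Hx. left; apply fN_pos; lra.
  - apply Rle_trans with (RInt (fun x => 4 * exp (- x)) a b).
    apply RInt_le; auto. apply fN_exRInt; lra. eexists; apply RInt_exp_neg.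
    intros; apply fN_bound; auto; lra.
    rewrite (is_RInt_unique _ _ _ _ (RInt_exp_neg a b)).
    assert (0 < exp (- b)) by apply exp_pos. lra.
Qed.

Lemma ball_R (x y : R) (e : R) : Rabs (y - x) < e -> ball x e y.
Proof. intros H. unfold ball; simpl. unfold AbsRing_ball, abs, minus, plus, opp; simpl. auto. Qed.

Lemma fN_gen N r : (2 <= N)%nat -> 0 < r ->
  exists l, is_RInt_gen (fN N) (at_point r) (Rbar_locally p_infty) l.
Proof.
  intros HN Hr.
  assert (Hl : exists l, filterlim (fun b => RInt (fN N) r b) (Rbar_locally p_infty) (locally l)).
  { apply (@filterlim_locally_cauchy R R_CompleteSpace (Rbar_locally p_infty) (Rbar_locally_filter _)).
    intros eps. set (B := Rmax (Rmax r 4) (- ln (eps / 8))).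
    exists (fun b => B < b). split. exists B; auto.
    assert (HB : 4 * exp (- B) < eps).
    { assert (- ln (eps / 8) <= B) by apply Rmax_r.
      assert (exp (- B) <= eps / 8).
      { assert (0 < eps) by apply cond_pos. rewrite <- (exp_ln (eps/8)) by lra.
        destruct (Req_dec (-B) (ln (eps/8))) as [EE|EE]. rewrite EE; lra. left; apply exp_increasing; lra. }
      assert (0 < eps) by apply cond_pos. lra. }
    assert (B4 : 4 <= B) by (eapply Rle_trans; [apply Rmax_r| apply Rmax_l]).
    assert (Br : r <= B) by (eapply Rle_trans; [apply Rmax_l| apply Rmax_l]).
    intros u v Hu Hv. apply ball_R.
    assert (E : RInt (fN N) r v - RInt (fN N) r u = RInt (fN N) u v).
    { rewrite <- (RInt_Chasles (fN N) r u v). unfold plus; simpl; ring.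
      apply fN_exRInt; lra. apply fN_exRInt; lra. }
    rewrite E. destruct (Rle_dec u v).
    + assert (T := fN_tail N u v HN ltac:(lra) r0).
      assert (exp (- u) <= exp (- B)) by (left; apply exp_increasing; lra).
      rewrite Rabs_right by lra. lra.
    + assert (T := fN_tail N v u HN ltac:(lra) ltac:(lra)).
      assert (exp (- v) <= exp (- B)) by (left; apply exp_increasing; lra).
      rewrite <- opp_RInt_swap by (apply fN_exRInt; lra). unfold opp; simpl. rewrite Rabs_Ropp. rewrite Rabs_right by lra. lra. }
  destruct Hl as [l Hl]. exists l. unfold is_RInt_gen.
  intros P HP. apply Filter_prod with (fun a => a = r) (fun b => r < b /\ P (RInt (fN N) r b)).
  reflexivity. apply filter_and. exists r; auto. apply Hl; auto.
  intros x y Hx [Hy1 Hy2]. subst x. simpl. exists (RInt (fN N) r y). split; auto.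
  apply (RInt_correct (V:=R_CompleteNormedModule)). apply fN_exRInt; lra.
Qed.

Definition IN N r := RInt_gen (fN N) (at_point r) (Rbar_locally p_infty).

Lemma IN_correct N r : (2 <= N)%nat -> 0 < r -> is_RInt_gen (fN N) (at_point r) (Rbar_locally p_infty) (IN N r).
Proof.
  intros HN Hr. destruct (fN_gen N r HN Hr) as [l Hl].
  unfold IN. Time rewrite (is_RInt_gen_unique (V:=R_CompleteNormedModule) (Fa:=at_point r) (Fb := Rbar_locally p_infty) _ _ Hl). auto.
Qed.


Lemma IN_chasles N r b : (2 <= N)%nat -> 0 < r -> 0 < b -> IN N r = RInt (fN N) r b + IN N b.
Proof.
  intros HN Hr Hb. unfold IN at 1. apply (is_RInt_gen_unique (V:=R_CompleteNormedModule) (Fa:=at_point r) (Fb := Rbar_locally p_infty)).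
  change (RInt (fN N) r b + IN N b) with (plus (RInt (fN N) r b) (IN N b)).
  apply (is_RInt_gen_Chasles (V:=R_NormedModule) (Fa:=at_point r) (Fc := Rbar_locally p_infty) (fN N) b).
  apply is_RInt_gen_at_point. apply (RInt_correct (V:=R_CompleteNormedModule)). apply fN_exRInt; auto.
  apply IN_correct; auto.
Qed.

Lemma IN_nonneg N b : (2 <= N)%nat -> 0 < b -> 0 <= IN N b.
Proof.
  intros HN Hb.
  assert (H := IN_correct N b HN Hb).
  assert (H0 := is_RInt_gen_scal (V:=R_NormedModule) (Fa:=at_point b) (Fb := Rbar_locally p_infty) (fN N) 0 (IN N b) H).
  assert (B : norm (scal 0 (IN N b)) <= IN N b).
  { apply (RInt_gen_norm (V:=R_CompleteNormedModule) (Fa:=at_point b) (Fb := Rbar_locally p_infty) (fun y => scal 0 (fN N y)) (fN N)); auto.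
  - apply Filter_prod with (fun a => a = b) (fun y => b < y). reflexivity. exists b; auto.
    intros x y Hx Hy; subst; simpl; lra.
  - apply Filter_prod with (fun a => a = b) (fun y => b < y). reflexivity. exists b; auto.
    intros x y Hx Hy; subst; simpl. intros z Hz; simpl in Hz. unfold scal, norm; simpl. unfold mult, abs; simpl.
    rewrite Rmult_0_l, Rabs_R0. left; apply fN_pos; lra. }
  unfold scal, norm in B; simpl in B. unfold mult, abs in B; simpl in B.
  rewrite Rmult_0_l, Rabs_R0 in B. apply B.
Qed.

Lemma IN_pos N r : (2 <= N)%nat -> 0 < r -> 0 < IN N r.
Proof.
  intros HN Hr. rewrite (IN_chasles N r (r+1)) by (auto; lra).
  assert (0 <= IN N (r+1)) by (apply IN_nonneg; auto; lra).
  assert (0 < RInt (fN N) r (r+1)).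
  { apply RInt_gt_0. lra. intros; apply fN_pos; lra. intros; apply fN_cont; lra. }
  lra.
Qed.

Lemma locally_pos' x : 0 < x -> locally x (fun t => 0 < t).
Proof.
  intros Hx. exists (mkposreal x Hx). intros y Hy.
  unfold ball in Hy; simpl in Hy. unfold AbsRing_ball, abs, minus, plus, opp in Hy; simpl in Hy.
  apply Rabs_lt_between in Hy. lra.
Qed.

Lemma IN_der N r : (2 <= N)%nat -> 0 < r -> is_derive (IN N) r (- fN N r).
Proof.
  intros HN Hr.
  apply is_derive_ext_loc with (fun x => RInt (fN N) x (r+1) + IN N (r+1)).
  { apply filter_imp with (2 := locally_pos' r Hr). intros x Hx. symmetry. apply IN_chasles; auto; lra. }
  assert (D1 : is_derive (fun x => RInt (fN N) x (r+1)) r (opp (fN N r))).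
  { apply (is_derive_RInt' (V:=R_NormedModule) (fN N) (fun x => RInt (fN N) x (r+1)) r (r+1)).
    apply filter_imp with (2 := locally_pos' r Hr). intros x Hx.
    apply (RInt_correct (V:=R_CompleteNormedModule)). apply fN_exRInt; lra.
    apply fN_cont; auto. }
  apply is_derive_Reals in D1. apply is_derive_Reals.
  replace (- fN N r) with (opp (fN N r) + 0) by (unfold opp; simpl; ring).
  apply derivable_pt_lim_plus. auto. apply derivable_pt_lim_const.
Qed.

Lemma s_eq N r : s_of_r N r = exp (- (1 / (INR N - 2)) * ln ((INR N - 2) * IN N r)).
Proof. reflexivity. Qed.

Lemma INR_N2 N : (5 <= N)%nat -> 3 <= INR N - 2.
Proof. intros H. apply le_INR in H. simpl in H. lra. Qed.

Lemma s_pos N r : 0 < s_of_r N r.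
Proof. rewrite s_eq. apply exp_pos. Qed.

Lemma s_rel N r : (5 <= N)%nat -> 0 < r -> s_of_r N r ^ (N - 2) * ((INR N - 2) * IN N r) = 1.
Proof.
  intros HN Hr. assert (c3 := INR_N2 N HN). assert (HI := IN_pos N r ltac:(lia) Hr).
  rewrite s_eq. rewrite <- exp_pow_nat. rewrite minus_INR by lia.
  replace ((INR N - INR 2) * (- (1 / (INR N - 2)) * ln ((INR N - 2) * IN N r))) with
    (- ln ((INR N - 2) * IN N r)) by (simpl; field; lra).
  rewrite exp_Ropp, exp_ln. field. split; lra. apply Rmult_lt_0_compat; lra.
Qed.

Lemma s_der N r : (5 <= N)%nat -> 0 < r -> is_derive (s_of_r N) r ((s_of_r N r / sinh r) ^ (N - 1)).
Proof.
  intros HN Hr. assert (c3 := INR_N2 N HN). assert (HI := IN_pos N r ltac:(lia) Hr).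
  assert (D := IN_der N r ltac:(lia) Hr).
  apply is_derive_ext with (fun x => exp (- (1 / (INR N - 2)) * ln ((INR N - 2) * IN N x))).
  intros; symmetry; apply s_eq.
  auto_derive. split. exists (- fN N r); auto. split; auto. apply Rmult_lt_0_compat; lra.
  replace (Derive (fun x => IN N x) r) with (- fN N r) by (symmetry; apply is_derive_unique; auto).
  assert (R1 := s_rel N r HN Hr). rewrite <- s_eq.
  assert (sh : 0 < sinh r) by (apply sinh_pos; auto).
  assert (sp := s_pos N r).
  unfold fN. unfold Rdiv. rewrite Rpow_mult_distr. rewrite pow_inv.
  replace (N - 1)%nat with (S (N - 2)) by lia. simpl.
  set (s := s_of_r N r) in *. set (I := IN N r) in *.
  assert (shp : 0 < sinh r ^ (N-2)) by (apply pow_lt; auto).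
  replace (s ^ (N-2)) with (/ ((INR N - 2) * I)).
  field. repeat split; lra.
  assert (0 < (INR N - 2) * I) by (apply Rmult_lt_0_compat; lra).
  apply Rmult_eq_reg_r with ((INR N - 2) * I). rewrite Rinv_l; lra. lra.
Qed.

Lemma s_incr N x y : (5 <= N)%nat -> 0 < x -> x < y -> s_of_r N x < s_of_r N y.
Proof.
  intros HN Hx Hxy.
  apply (incr_function (s_of_r N) (Finite 0) p_infty (fun r => (s_of_r N r / sinh r) ^ (N - 1))); simpl; auto.
  intros; apply s_der; auto.
  intros r Hr _. apply Rlt_gt. apply pow_lt. apply Rdiv_lt_0_compat. apply s_pos. apply sinh_pos; auto.
Qed.

Lemma s_cont N x : (5 <= N)%nat -> 0 < x -> continuity_pt (s_of_r N) x.
Proof.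
  intros HN Hx. apply derivable_continuous_pt. exists ((s_of_r N x / sinh x) ^ (N - 1)).
  apply is_derive_Reals. apply s_der; auto.
Qed.

Lemma s_inj N x y : (5 <= N)%nat -> 0 < x -> 0 < y -> s_of_r N x = s_of_r N y -> x = y.
Proof.
  intros HN Hx Hy E. destruct (Rtotal_order x y) as [H|[H|H]]; auto.
  assert (T := s_incr N x y HN Hx H). lra.
  assert (T := s_incr N y x HN Hy H). lra.
Qed.

Lemma r_of_s_s N r : (5 <= N)%nat -> 0 < r -> r_of_s N (s_of_r N r) = r.
Proof.
  intros HN Hr. unfold r_of_s.
  destruct (ClassicalEpsilon.epsilon_spec (inhabits 0) (fun r' => 0 < r' /\ s_of_r N r' = s_of_r N r)) as [H1 H2].
  exists r; auto. apply (s_inj N); auto.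
Qed.

Lemma s_surj N a b y : (5 <= N)%nat -> 0 < a -> a < b -> s_of_r N a <= y <= s_of_r N b ->
  exists r, a <= r <= b /\ s_of_r N r = y.
Proof.
  intros HN Ha Hab [H1 H2].
  destruct (Req_dec y (s_of_r N a)) as [E|E]. exists a; split; auto; lra.
  destruct (Req_dec y (s_of_r N b)) as [E'|E']. exists b; split; auto; lra.
  destruct (Ranalysis5.IVT_interv (fun t => s_of_r N t - y) a b) as [z [Hz Ez]]; auto.
  intros t Ht. apply continuity_pt_minus. apply s_cont; auto; lra. apply continuity_pt_const. intros u v; auto.
  lra. lra. exists z; split; auto. lra.
Qed.

Lemma r_of_s_range N a b y : (5 <= N)%nat -> 0 < a -> a < b -> s_of_r N a <= y <= s_of_r N b ->
  a <= r_of_s N y <= b /\ s_of_r N (r_of_s N y) = y.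
Proof.
  intros HN Ha Hab Hy. destruct (s_surj N a b y HN Ha Hab Hy) as [r [Hr E]].
  subst y. rewrite r_of_s_s; auto; lra.
Qed.

Definition s_derivable N (HN : (5 <= N)%nat) r (Hr : 0 < r) : derivable_pt (s_of_r N) r :=
  exist _ ((s_of_r N r / sinh r) ^ (N - 1)) (proj1 (is_derive_Reals _ _ _) (s_der N r HN Hr)).

Lemma r_cont N a b y : (5 <= N)%nat -> 0 < a -> a < b -> s_of_r N a < y < s_of_r N b ->
  continuity_pt (r_of_s N) y.
Proof.
  intros HN Ha Hab Hy.
  apply (Ranalysis5.continuity_pt_recip_interv (s_of_r N) (r_of_s N) a b); auto.
  intros x z Hx Hxz Hz. apply s_incr; auto; lra.
  intros x H1 H2. apply (r_of_s_range N a b x HN Ha Hab); lra.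
  intros x H1 H2. apply (r_of_s_range N a b x HN Ha Hab); lra.
  intros x Hx. apply s_cont; auto; lra.
Qed.

Lemma r_der N a b y : (5 <= N)%nat -> 0 < a -> a < b -> s_of_r N a < y < s_of_r N b ->
  is_derive (r_of_s N) y ((sinh (r_of_s N y) / y) ^ (N - 1)).
Proof.
  intros HN Ha Hab Hy.
  assert (ga : r_of_s N (s_of_r N a) = a) by (apply r_of_s_s; auto).
  assert (gb : r_of_s N (s_of_r N b) = b) by (apply r_of_s_s; auto; lra).
  destruct (r_of_s_range N a b y HN Ha Hab ltac:(lra)) as [Hr Er].
  assert (Prf : forall a', r_of_s N (s_of_r N a) <= a' <= r_of_s N (s_of_r N b) -> derivable_pt (s_of_r N) a').
  { intros a' Ha'. apply (s_derivable N HN a'). lra. }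
  assert (Pi : r_of_s N (s_of_r N a) <= r_of_s N y <= r_of_s N (s_of_r N b)) by lra.
  assert (D := Ranalysis5.derivable_pt_lim_recip_interv (s_of_r N) (r_of_s N) (s_of_r N a) (s_of_r N b) y
    (fun a' H => s_derivable N HN a' (ltac:(lra) : 0 < a'))
    (r_cont N a b y HN Ha Hab Hy) ltac:(lra) Hy Pi).
  simpl in D. apply is_derive_Reals.
  set (r := r_of_s N y) in *.
  assert (sh : 0 < sinh r) by (apply sinh_pos; lra).
  assert (yp : 0 < y) by (rewrite <- Er; apply s_pos).
  replace ((sinh r / y) ^ (N - 1)) with (1 / (s_of_r N r / sinh r) ^ (N - 1)).
  apply D.
  intros x Hx. apply (r_of_s_range N a b x HN Ha Hab); lra.
  apply Rgt_not_eq, pow_lt. apply Rdiv_lt_0_compat; lra.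
  rewrite Er. unfold Rdiv. rewrite !Rpow_mult_distr, !pow_inv. field. split; apply pow_nonzero; lra.
Qed.

Lemma Dn_sub n U V f : (forall x, U x -> V x) -> Dn n V f -> Dn n U f.
Proof. intros H D k Hk x Hx. apply D; auto. Qed.

Lemma Dn_union n U V f : Dn n U f -> Dn n V f -> (forall x, U x \/ V x) -> forall k x, (k < n)%nat -> ex_derive (Derive_n f k) x.
Proof. intros D1 D2 H k x Hk. destruct (H x); [apply D1|apply D2]; auto. Qed.

Definition Ioo (a b : R) (x : R) : Prop := a < x < b.

Lemma opn_Ioo a b : opn (Ioo a b).
Proof.
  intros x [H1 H2]. assert (0 < Rmin (x - a) (b - x)) by (apply Rmin_pos; lra).
  exists (mkposreal _ H). intros y Hy. unfold ball in Hy; simpl in Hy.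
  unfold AbsRing_ball, abs, minus, plus, opp in Hy; simpl in Hy.
  apply Rabs_lt_between in Hy. assert (Rmin (x-a) (b-x) <= x - a) by apply Rmin_l.
  assert (Rmin (x-a) (b-x) <= b - x) by apply Rmin_r. unfold Ioo. lra.
Qed.

Lemma opn_True : opn (fun _ => True).
Proof. intros x _. exists (mkposreal 1 Rlt_0_1). auto. Qed.

Lemma Sm_sinh U : opn U -> Sm U sinh.
Proof. intros HU n. apply (Sm_sinh_cosh U HU n). Qed.

Lemma Sm_r N a b : (5 <= N)%nat -> 0 < a -> a < b -> Sm (Ioo (s_of_r N a) (s_of_r N b)) (r_of_s N).
Proof.
  intros HN Ha Hab. set (U := Ioo (s_of_r N a) (s_of_r N b)).
  assert (HU : opn U) by apply opn_Ioo.
  assert (Upos : forall y, U y -> 0 < y).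
  { intros y [H1 H2]. assert (0 < s_of_r N a) by apply s_pos. lra. }
  intros n. induction n. apply Dn_0.
  apply DnS. split.
  - intros x Hx. eexists. apply (r_der N a b x HN Ha Hab Hx).
  - apply Dn_ext with (fun y => (sinh (r_of_s N y) * / y) ^ (N - 1)); auto.
    intros y Hy. symmetry. apply is_derive_unique. apply (r_der N a b y HN Ha Hab Hy).
    apply Dn_pow; auto. apply Dn_mult; auto.
    apply Dn_comp with (fun _ => True); auto. apply opn_True. apply Sm_sinh. apply opn_True.
    apply Dn_sub with Rpos. intros; apply Upos; auto. apply Sm_inv.
Qed.

Definition mN (N : nat) : R := (INR N - 1) / 2.

Definition Phi N L r : R := exp (- mN N * ln (sinh r) + ln r / 2) * psi (ln r / L).

Lemma Sm_Phi N L : Sm Rpos (Phi N L).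
Proof.
  intros n. unfold Phi. assert (HU := opn_Rpos). apply Dn_mult; auto.
  - apply Dn_comp with (fun _ => True); auto. apply opn_True. apply Sm_exp. apply opn_True.
    apply Dn_plus; auto. apply Dn_scal; auto.
    apply Dn_comp with Rpos; auto. intros x Hx. apply sinh_pos; auto. apply Sm_ln.
    apply Sm_sinh; auto.
    apply Dn_ext with (fun x => / 2 * ln x); auto. intros; unfold Rdiv; ring.
    apply Dn_scal; auto. apply Sm_ln.
  - apply Dn_comp with (fun _ => True); auto. apply opn_True. apply Sm_psi. apply opn_True.
    apply Dn_ext with (fun x => / L * ln x); auto. intros; unfold Rdiv; ring.
    apply Dn_scal; auto. apply Sm_ln.
Qed.

Lemma Phi_zero N L r : 0 < L -> 0 < r -> (r <= exp L \/ exp (2 * L) <= r) -> Phi N L r = 0.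
Proof.
  intros HL Hr H. unfold Phi. rewrite psi_zero. ring.
  destruct H as [H|H].
  - left. apply Rmult_le_reg_r with L; auto. unfold Rdiv. rewrite Rmult_assoc, Rinv_l by lra.
    rewrite Rmult_1_r, Rmult_1_l. rewrite <- (ln_exp L). apply ln_le; auto.
  - right. apply Rmult_le_reg_r with L; auto. unfold Rdiv. rewrite Rmult_assoc, Rinv_l by lra.
    rewrite Rmult_1_r. rewrite Rmult_comm. rewrite <- (ln_exp (L * 2)). apply ln_le. apply exp_pos.
    replace (L * 2) with (2 * L) by ring. auto.
Qed.

Definition bL (L : R) := exp (2 * L) + 1.
Definition vfun N L (s : R) : R :=
  if Rlt_dec (s_of_r N 1) s then if Rlt_dec s (s_of_r N (bL L)) then Phi N L (r_of_s N s) else 0 else 0.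

Lemma expL_gt1 L : 3 <= L -> 1 < exp L.
Proof. intros H. assert (1 + L < exp L) by (apply exp_ineq1; lra). lra. Qed.

Lemma exp_mono a b : a < b -> exp a < exp b.
Proof. apply exp_increasing. Qed.

Lemma v_U1 N L s : Ioo (s_of_r N 1) (s_of_r N (bL L)) s -> vfun N L s = Phi N L (r_of_s N s).
Proof.
  intros [H1 H2]. unfold vfun. destruct (Rlt_dec (s_of_r N 1) s); [|lra].
  destruct (Rlt_dec s (s_of_r N (bL L))); [auto|lra].
Qed.

Definition U2 N L (s : R) : Prop := s < s_of_r N (exp L) \/ s_of_r N (exp (2 * L)) < s.

Lemma opn_U2 N L : opn (U2 N L).
Proof.
  intros x [H|H].
  - destruct (opn_Ioo (x - 1) (s_of_r N (exp L)) x) as [e He]. unfold Ioo; lra.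
    exists e. intros y Hy. left. apply He in Hy. unfold Ioo in Hy; lra.
  - destruct (opn_Ioo (s_of_r N (exp (2 * L))) (x + 1) x) as [e He]. unfold Ioo; lra.
    exists e. intros y Hy. right. apply He in Hy. unfold Ioo in Hy; lra.
Qed.

Lemma v_U2 N L s : (5 <= N)%nat -> 3 <= L -> U2 N L s -> vfun N L s = 0.
Proof.
  intros HN HL Hs. unfold vfun.
  destruct (Rlt_dec (s_of_r N 1) s) as [h1|h1]; auto.
  destruct (Rlt_dec s (s_of_r N (bL L))) as [h2|h2]; auto.
  assert (e1 := expL_gt1 L HL). assert (e2 : exp L < exp (2 * L)) by (apply exp_mono; lra).
  assert (bpos : 1 < bL L) by (unfold bL; lra).
  destruct (r_of_s_range N 1 (bL L) s HN ltac:(lra) bpos ltac:(lra)) as [Hr Er].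
  apply Phi_zero; try lra.
  destruct Hs as [Hs|Hs].
  - left. destruct (Rle_dec (r_of_s N s) (exp L)); auto.
    assert (s_of_r N (exp L) < s_of_r N (r_of_s N s)) by (apply s_incr; auto; lra). lra.
  - right. destruct (Rle_dec (exp (2 * L)) (r_of_s N s)); auto.
    assert (s_of_r N (r_of_s N s) < s_of_r N (exp (2 * L))) by (apply s_incr; auto; lra). lra.
Qed.

Lemma v_smooth N L : (5 <= N)%nat -> 3 <= L -> smooth_cc_pos (vfun N L).
Proof.
  intros HN HL.
  assert (e1 := expL_gt1 L HL). assert (e2 : exp L < exp (2 * L)) by (apply exp_mono; lra).
  assert (bpos : 1 < bL L) by (unfold bL; lra).
  split.
  - intros k x. apply (Dn_union (S k) (Ioo (s_of_r N 1) (s_of_r N (bL L))) (U2 N L)); try lia.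
    + apply Dn_ext with (fun s => Phi N L (r_of_s N s)). apply opn_Ioo.
      intros; symmetry; apply v_U1; auto.
      apply Dn_comp with Rpos. apply opn_Ioo. apply opn_Rpos.
      intros y Hy. destruct (r_of_s_range N 1 (bL L) y HN ltac:(lra) bpos) as [Hr _].
      destruct Hy; lra. unfold Rpos; lra.
      apply Sm_Phi. apply Sm_r; auto; lra.
    + apply Dn_ext with (fun _ => 0). apply opn_U2. intros; symmetry; apply v_U2; auto.
      apply Dn_const. apply opn_U2.
    + intros y. destruct (Rlt_dec y (s_of_r N (exp L))). right; left; auto.
      destruct (Rlt_dec (s_of_r N (exp (2 * L))) y). right; right; auto.
      left. assert (s_of_r N 1 < s_of_r N (exp L)) by (apply s_incr; auto; lra).
      assert (s_of_r N (exp (2 * L)) < s_of_r N (bL L)) by (apply s_incr; auto; unfold bL; lra).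
      unfold Ioo; lra.
  - exists (s_of_r N (exp L)), (s_of_r N (exp (2 * L))). split. apply s_pos. split.
    apply s_incr; auto; lra. intros x Hx. apply v_U2; auto.
Qed.

Lemma psi_ex0 x : ex_derive psi x.
Proof. apply (Sm_psi (fun _ => True) opn_True 1%nat 0%nat); auto. Qed.
Lemma psi_ex1 x : ex_derive (Derive psi) x.
Proof. apply (Sm_psi (fun _ => True) opn_True 2%nat 1%nat); auto. Qed.
Lemma psi_ex2 x : ex_derive (Derive (Derive psi)) x.
Proof. apply (Sm_psi (fun _ => True) opn_True 3%nat 2%nat); auto. Qed.

Definition EE N r := - mN N * ln (sinh r) + ln r / 2.
Definition Ep N r := - mN N * (cosh r / sinh r) + / (2 * r).
Definition Epp N r := - mN N * (1 - cosh r ^ 2 / sinh r ^ 2) - / (2 * r ^ 2).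
Definition P0 L r := psi (ln r / L).
Definition P1 L r := Derive psi (ln r / L).
Definition P2 L r := Derive (Derive psi) (ln r / L).

Definition Phi1 N L r := exp (EE N r) * (Ep N r * P0 L r + P1 L r / (L * r)).
Definition Phi2 N L r := exp (EE N r) * ((Epp N r + Ep N r ^ 2) * P0 L r + 2 * Ep N r * P1 L r / (L * r)
   + P2 L r / (L ^ 2 * r ^ 2) - P1 L r / (L * r ^ 2)).

Lemma cosh2 r : cosh r ^ 2 = 1 + sinh r ^ 2.
Proof.
  unfold cosh, sinh. assert (exp r * exp (- r) = 1) by (rewrite <- exp_plus; replace (r + - r) with 0 by ring; apply exp_0).
  nra.
Qed.

Lemma Phi_d N L r : 0 < L -> 0 < r -> is_derive (Phi N L) r (Phi1 N L r).
Proof.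
  intros HL Hr. assert (sh := sinh_pos r Hr). unfold Phi, Phi1, EE, Ep, P0, P1.
  auto_derive. repeat split; try lra. apply psi_ex0.
  change (fun x => psi x) with psi. unfold Rdiv. field. repeat split; lra.
Qed.

Lemma Phi1_d N L r : 0 < L -> 0 < r -> is_derive (Phi1 N L) r (Phi2 N L r).
Proof.
  intros HL Hr. assert (sh := sinh_pos r Hr). unfold Phi1, Phi2, EE, Ep, Epp, P0, P1, P2.
  auto_derive.
  all: try (repeat split; try lra; try apply psi_ex0; try apply psi_ex1; apply Rmult_integral_contrapositive; split; lra).
  change (fun x => psi x) with psi. change (fun x => Derive psi x) with (Derive psi).
  unfold Rdiv. field. repeat split; lra.
Qed.

Lemma r_pos_U1 N L s : (5 <= N)%nat -> 3 <= L -> Ioo (s_of_r N 1) (s_of_r N (bL L)) s ->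
  1 <= r_of_s N s <= bL L /\ s_of_r N (r_of_s N s) = s.
Proof.
  intros HN HL [H1 H2]. assert (e1 := expL_gt1 L HL).
  assert (bpos : 1 < bL L) by (unfold bL; assert (exp L < exp (2*L)) by (apply exp_mono; lra); lra).
  apply (r_of_s_range N 1 (bL L) s HN ltac:(lra) bpos); lra.
Qed.

Lemma v_der_U1 N L s : (5 <= N)%nat -> 3 <= L -> Ioo (s_of_r N 1) (s_of_r N (bL L)) s ->
  is_derive (vfun N L) s ((sinh (r_of_s N s) / s) ^ (N - 1) * Phi1 N L (r_of_s N s)).
Proof.
  intros HN HL Hs. assert (e1 := expL_gt1 L HL).
  assert (bpos : 1 < bL L) by (unfold bL; assert (exp L < exp (2*L)) by (apply exp_mono; lra); lra).
  destruct (r_pos_U1 N L s HN HL Hs) as [Hr _].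
  apply is_derive_ext_loc with (fun s => Phi N L (r_of_s N s)).
  apply loc_eq with (Ioo (s_of_r N 1) (s_of_r N (bL L))); auto. apply opn_Ioo.
  intros; symmetry; apply v_U1; auto.
  evar (z : R). replace ((sinh (r_of_s N s) / s) ^ (N - 1) * Phi1 N L (r_of_s N s)) with z.
  apply (is_derive_comp (Phi N L) (r_of_s N)). apply Phi_d; lra.
  apply (r_der N 1 (bL L) s HN ltac:(lra) bpos Hs).
  unfold z, scal; simpl. unfold mult; simpl. ring.
Qed.

Definition HPhi N L r := Phi2 N L r + (INR N - 1) * (cosh r / sinh r) * Phi1 N L r.

Lemma lap_U1 N L s : (5 <= N)%nat -> 3 <= L -> Ioo (s_of_r N 1) (s_of_r N (bL L)) s ->
  radial_lap N (vfun N L) s = rho N s * HPhi N L (r_of_s N s).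
Proof.
  intros HN HL Hs. assert (e1 := expL_gt1 L HL).
  assert (bpos : 1 < bL L) by (unfold bL; assert (exp L < exp (2*L)) by (apply exp_mono; lra); lra).
  destruct (r_pos_U1 N L s HN HL Hs) as [Hr Es].
  assert (sp : 0 < s) by (rewrite <- Es; apply s_pos).
  set (U := Ioo (s_of_r N 1) (s_of_r N (bL L))).
  assert (HU : opn U) by apply opn_Ioo.
  assert (DV : forall y, U y -> Derive (vfun N L) y = (sinh (r_of_s N y) / y) ^ (N - 1) * Phi1 N L (r_of_s N y)).
  { intros y Hy. apply is_derive_unique. apply v_der_U1; auto. }
  unfold radial_lap. simpl Derive_n.
  rewrite (Derive_ext_loc (Derive (vfun N L)) (fun y => (sinh (r_of_s N y) / y) ^ (N - 1) * Phi1 N L (r_of_s N y)))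
    by (apply loc_eq with U; auto).
  rewrite DV by auto.
  assert (Dr : is_derive (r_of_s N) s ((sinh (r_of_s N s) / s) ^ (N - 1))) by (apply (r_der N 1 (bL L) s HN ltac:(lra) bpos Hs)).
  assert (DP : is_derive (Phi1 N L) (r_of_s N s) (Phi2 N L (r_of_s N s))) by (apply Phi1_d; lra).
  assert (shp : 0 < sinh (r_of_s N s)) by (apply sinh_pos; lra).
  match goal with |- context [Derive ?f s] =>
    replace (Derive f s) with (INR (N - 1) * (sinh (r_of_s N s) / s) ^ (N - 2) * (cosh (r_of_s N s) * (sinh (r_of_s N s) / s) ^ (N - 1) / s - sinh (r_of_s N s) / s ^ 2) * Phi1 N L (r_of_s N s) + (sinh (r_of_s N s) / s) ^ (N - 1) * ((sinh (r_of_s N s) / s) ^ (N - 1) * Phi2 N L (r_of_s N s))) end.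
  2: { symmetry; apply is_derive_unique. auto_derive.
       all: try (repeat match goal with |- _ /\ _ => split end).
       all: try lra.
       all: try (solve [eexists; apply Dr]).
       all: try (solve [eexists; apply DP]).
       change (fun x : R => r_of_s N x) with (r_of_s N). change (fun x : R => Phi1 N L x) with (Phi1 N L).
       rewrite (is_derive_unique _ _ _ Dr), (is_derive_unique _ _ _ DP).
       replace (Init.Nat.pred (N - 1)) with (N - 2)%nat by lia. unfold Rdiv. field. lra. }
  unfold rho, HPhi. replace (2 * (N - 1))%nat with ((N - 1) + (N - 1))%nat by lia.
  rewrite pow_add. replace (N - 1)%nat with (S (N - 2)) by lia. rewrite S_INR.
  replace (INR N) with (INR (N - 2) + 2) by (rewrite minus_INR by lia; simpl; ring).
  simpl. unfold Rdiv. field. lra.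
Qed.

Definition Qf N L r := P2 L r / (L ^ 2 * r ^ 2) - P0 L r / (4 * r ^ 2)
   - (mN N ^ 2 + (mN N ^ 2 - mN N) / sinh r ^ 2) * P0 L r.

Lemma HPhi_eq N L r : 0 < L -> 0 < r -> HPhi N L r = exp (EE N r) * Qf N L r.
Proof.
  intros HL Hr. assert (sh := sinh_pos r Hr). assert (C := cosh2 r).
  unfold HPhi. replace (INR N - 1) with (2 * mN N) by (unfold mN; field).
  apply Rminus_diag_uniq.
  transitivity (exp (EE N r) * P0 L r * (mN N - mN N ^ 2) / sinh r ^ 2 * (cosh r ^ 2 - 1 - sinh r ^ 2)).
  unfold Phi2, Phi1, Epp, Ep, Qf. field. repeat split; lra.
  rewrite C. ring.
Qed.

Lemma expEE2 N r : (5 <= N)%nat -> 0 < r -> exp (EE N r) ^ 2 * sinh r ^ (N - 1) = r.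
Proof.
  intros HN Hr. assert (sh := sinh_pos r Hr). unfold EE.
  rewrite <- exp_pow_nat. simpl INR.
  replace ((1 + 1) * (- mN N * ln (sinh r) + ln r / 2)) with (- (INR (N - 1) * ln (sinh r)) + ln r).
  rewrite exp_plus, exp_Ropp, exp_ln by auto. rewrite exp_pow_nat, exp_ln by auto. field.
  apply pow_nonzero; lra.
  unfold mN. rewrite minus_INR by lia. simpl. field.
Qed.

Definition Fint N L A s := / rho N s * (radial_lap N (vfun N L) s) ^ 2 * s ^ (N - 1)
  - (INR N - 1) ^ 4 / 16 * (rho N s * (vfun N L s) ^ 2 * s ^ (N - 1))
  - A * (rho N s / (r_of_s N s) ^ 2 * (vfun N L s) ^ 2 * s ^ (N - 1)).

Definition Sf N L t := s_of_r N (exp (L * t)).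
Definition Sd N L t := (Sf N L t / sinh (exp (L * t))) ^ (N - 1) * (L * exp (L * t)).

Definition Gf N L A t := let r := exp (L * t) in
  L * r ^ 2 * (Qf N L r) ^ 2 - (INR N - 1) ^ 4 / 16 * L * r ^ 2 * (P0 L r) ^ 2 - A * L * (P0 L r) ^ 2.

Lemma pointwise N L A t : (5 <= N)%nat -> 3 <= L -> 1 < exp (L * t) < bL L ->
  Sd N L t * Fint N L A (Sf N L t) = Gf N L A t.
Proof.
  intros HN HL Ht.
  set (r := exp (L * t)). set (s := Sf N L t).
  assert (rp : 0 < r) by (unfold r; apply exp_pos).
  assert (Hrs : r_of_s N s = r) by (unfold s, Sf; apply r_of_s_s; auto).
  assert (Hs : Ioo (s_of_r N 1) (s_of_r N (bL L)) s).
  { unfold s, Sf. split; apply s_incr; auto; lra. }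
  assert (sp : 0 < s) by (unfold s, Sf; apply s_pos).
  assert (sh : 0 < sinh r) by (apply sinh_pos; auto).
  unfold Fint, Gf. fold r.
  rewrite (lap_U1 N L s HN HL Hs). rewrite (v_U1 N L s Hs). rewrite Hrs.
  rewrite HPhi_eq by lra.
  assert (E2 := expEE2 N r HN rp).
  unfold rho. rewrite Hrs. unfold Sd. fold r. fold s.
  set (K := (sinh r / s) ^ (N - 1)). set (M := s ^ (N - 1)).
  assert (Kp : 0 < K) by (unfold K; apply pow_lt; apply Rdiv_lt_0_compat; auto).
  assert (Mp : 0 < M) by (unfold M; apply pow_lt; auto).
  assert (R1 : (sinh r / s) ^ (2 * (N - 1)) = K ^ 2).
  { unfold K. rewrite <- pow_mult. f_equal. lia. }
  assert (R2 : (s / sinh r) ^ (N - 1) = / K).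
  { unfold K. unfold Rdiv. rewrite !Rpow_mult_distr, !pow_inv. field. split; apply pow_nonzero; lra. }
  assert (R3 : sinh r ^ (N - 1) = K * M).
  { unfold K, M. unfold Rdiv. rewrite Rpow_mult_distr, pow_inv. field. apply pow_nonzero; lra. }
  rewrite R1, R2. rewrite R3 in E2.
  unfold Phi. fold (EE N r). fold (P0 L r).
  set (X := exp (EE N r)) in *.
  assert (HX : X ^ 2 = r / (K * M)) by (rewrite <- E2; field; split; lra).
  transitivity (L * r * K * M * X ^ 2 * Qf N L r ^ 2 - (INR N - 1) ^ 4 / 16 * L * r * K * M * X ^ 2 * P0 L r ^ 2
     - A * L * K * M * X ^ 2 / r ^ 2 * r * P0 L r ^ 2).
  field. repeat split; lra.
  rewrite HX. field. repeat split; lra.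
Qed.

Definition Dc (m : R) := 5 + 108 * (m^2 - m)^2 + 108 * m^2 * (m^2 - m) + m^2.

Lemma Gbound m A L r p0 p2 sh : 2 <= m -> 3 <= L -> 1 + L <= r -> 1 <= sh -> L * r ^ 2 / sh ^ 2 <= 54 ->
  L * r ^ 2 * (p2 / (L ^ 2 * r ^ 2) - p0 / (4 * r ^ 2) - (m ^ 2 + (m ^ 2 - m) / sh ^ 2) * p0) ^ 2
  - (2 * m) ^ 4 / 16 * L * r ^ 2 * p0 ^ 2 - A * L * p0 ^ 2
  <= L * (m ^ 2 / 2 - A) * p0 ^ 2 + Dc m * (p0 ^ 2 + p2 ^ 2).
Proof.
  intros Hm HL Hr Hsh H54.
  assert (rp : 0 < r) by lra. assert (shp : 0 < sh) by lra.
  assert (Eq : L * r ^ 2 * (p2 / (L ^ 2 * r ^ 2) - p0 / (4 * r ^ 2) - (m ^ 2 + (m ^ 2 - m) / sh ^ 2) * p0) ^ 2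
  - (2 * m) ^ 4 / 16 * L * r ^ 2 * p0 ^ 2 - A * L * p0 ^ 2
  = L * r ^ 2 * ((p2 / (L ^ 2 * r ^ 2) - p0 / (4 * r ^ 2)) - (m ^ 2 - m) / sh ^ 2 * p0) ^ 2 - 2 * m ^ 2 * p0 * p2 / L + m ^ 2 / 2 * L * p0 ^ 2
    + 2 * m ^ 2 * (m ^ 2 - m) * p0 ^ 2 * (L * r ^ 2 / sh ^ 2) - A * L * p0 ^ 2).
  { field. repeat split; lra. }
  rewrite Eq. clear Eq.
  set (X := p2 / (L ^ 2 * r ^ 2) - p0 / (4 * r ^ 2)).
  set (y := (m ^ 2 - m) / sh ^ 2 * p0).
  assert (b0 : 0 <= m ^ 2 - m) by nra.
  assert (Lr : L / r ^ 2 <= 1).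
  { apply Rmult_le_reg_r with (r ^ 2). nra. unfold Rdiv. rewrite Rmult_assoc, Rinv_l by nra. nra. }
  assert (T1a : L * r ^ 2 * X ^ 2 <= 2 * p2 ^ 2 + p0 ^ 2).
  { replace (L * r ^ 2 * X ^ 2) with (L / r ^ 2 * (p2 / L ^ 2 - p0 / 4) ^ 2) by (unfold X; field; lra).
    assert (Q : (p2 / L ^ 2 - p0 / 4) ^ 2 <= 2 * p2 ^ 2 + p0 ^ 2).
    { assert (L4 : 1 <= L ^ 2) by nra.
      assert (Ha : (p2 / L ^ 2) ^ 2 <= p2 ^ 2).
      { unfold Rdiv. rewrite Rpow_mult_distr. assert (0 <= / L ^ 2 <= 1).
        split. left; apply Rinv_0_lt_compat; nra. rewrite <- Rinv_1. apply Rinv_le_contravar; lra.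
        assert (0 <= (/ L ^ 2) ^ 2 <= 1) by (split; [apply pow2_ge_0| nra]). nra. }
      nra. }
    assert (0 <= L / r ^ 2) by (apply Rmult_le_pos; [nra| left; apply Rinv_0_lt_compat; nra]). 
    assert (0 <= (p2 / L ^ 2 - p0 / 4) ^ 2) by apply pow2_ge_0. nra. }
  assert (T1b : L * r ^ 2 * y ^ 2 <= 54 * (m ^ 2 - m) ^ 2 * p0 ^ 2).
  { replace (L * r ^ 2 * y ^ 2) with ((m ^ 2 - m) ^ 2 * p0 ^ 2 * (L * r ^ 2 / sh ^ 2) / sh ^ 2) by (unfold y; field; lra).
    assert (1 <= sh ^ 2) by nra.
    assert (0 <= L * r ^ 2 / sh ^ 2) by (apply Rmult_le_pos; [nra| left; apply Rinv_0_lt_compat; nra]).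
    assert (Z : 0 <= (m ^ 2 - m) ^ 2 * p0 ^ 2) by (apply Rmult_le_pos; apply pow2_ge_0).
    assert (W : (m ^ 2 - m) ^ 2 * p0 ^ 2 * (L * r ^ 2 / sh ^ 2) <= (m ^ 2 - m) ^ 2 * p0 ^ 2 * 54)
      by (apply Rmult_le_compat_l; auto).
    assert (I1 : / sh ^ 2 <= 1) by (rewrite <- Rinv_1; apply Rinv_le_contravar; lra).
    assert (I0 : 0 <= / sh ^ 2) by (left; apply Rinv_0_lt_compat; lra).
    assert (ZW : 0 <= (m ^ 2 - m) ^ 2 * p0 ^ 2 * (L * r ^ 2 / sh ^ 2)) by (apply Rmult_le_pos; auto).
    unfold Rdiv at 2. nra. }
  assert (T1 : L * r ^ 2 * (X - y) ^ 2 <= 2 * (L * r ^ 2 * X ^ 2) + 2 * (L * r ^ 2 * y ^ 2)).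
  { assert (0 <= L * r ^ 2) by nra. assert (0 <= (X + y) ^ 2) by apply pow2_ge_0. nra. }
  assert (T2 : - 2 * m ^ 2 * p0 * p2 / L <= m ^ 2 * (p0 ^ 2 + p2 ^ 2)).
  { replace (- 2 * m ^ 2 * p0 * p2 / L) with (m ^ 2 * (- 2 * p0 * p2) / L) by (field; lra).
    assert (0 <= m ^ 2 * (p0 ^ 2 + p2 ^ 2)) by (apply Rmult_le_pos; nra).
    assert (m ^ 2 * (- 2 * p0 * p2) <= m ^ 2 * (p0 ^ 2 + p2 ^ 2)) by (apply Rmult_le_compat_l; [nra| assert (0 <= (p0 + p2) ^ 2) by apply pow2_ge_0; nra]).
    apply Rle_trans with (m ^ 2 * (p0 ^ 2 + p2 ^ 2) / L).
    unfold Rdiv. apply Rmult_le_compat_r. left; apply Rinv_0_lt_compat; lra. auto.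
    apply Rmult_le_reg_r with L. lra. unfold Rdiv. rewrite Rmult_assoc, Rinv_l by lra. nra. }
  assert (T3 : 2 * m ^ 2 * (m ^ 2 - m) * p0 ^ 2 * (L * r ^ 2 / sh ^ 2) <= 108 * m ^ 2 * (m ^ 2 - m) * p0 ^ 2).
  { assert (0 <= 2 * m ^ 2 * (m ^ 2 - m) * p0 ^ 2) by (apply Rmult_le_pos; [apply Rmult_le_pos; [apply Rmult_le_pos; nra| auto] | apply pow2_ge_0]).
    assert (0 <= L * r ^ 2 / sh ^ 2) by (apply Rmult_le_pos; [nra| left; apply Rinv_0_lt_compat; nra]). nra. }
  unfold Dc. nra.
Qed.

Lemma is_RInt_zero f a b : (forall x, Rmin a b < x < Rmax a b -> f x = 0) -> is_RInt f a b 0.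
Proof.
  intros H. apply (is_RInt_ext (V:=R_NormedModule) (fun _ => 0)). intros; symmetry; auto.
  pose proof (is_RInt_const (V:=R_NormedModule) a b 0) as H2.
  unfold scal in H2; simpl in H2; unfold mult in H2; simpl in H2. rewrite Rmult_0_r in H2. exact H2.
Qed.

Lemma int00 f c d : 0 < c -> c < d -> (forall x, x < c \/ d < x -> f x = 0) -> ex_RInt f c d ->
  int_0_oo f = RInt f c d.
Proof.
  intros Hc Hcd Hz Hex. unfold int_0_oo.
  apply (is_RInt_gen_unique (V:=R_CompleteNormedModule) (Fa := at_right 0) (Fb := Rbar_locally p_infty)).
  intros P HP. apply Filter_prod with (fun a => 0 < a < c) (fun b => d < b).
  - exists (mkposreal c Hc). intros y Hy Hy0. unfold ball in Hy; simpl in Hy.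
    unfold AbsRing_ball, abs, minus, plus, opp in Hy; simpl in Hy. apply Rabs_lt_between in Hy. lra.
  - exists d; auto.
  - intros x y Hx Hy. simpl. exists (RInt f c d). split.
    + replace (RInt f c d) with (plus (plus 0 (RInt f c d)) 0) by (unfold plus; simpl; ring).
      apply (is_RInt_Chasles (V:=R_NormedModule) f x d y).
      apply (is_RInt_Chasles (V:=R_NormedModule) f x c d).
      apply is_RInt_zero. intros z Hz1. apply Hz. left. rewrite Rmax_right in Hz1 by lra. lra.
      apply (RInt_correct (V:=R_CompleteNormedModule)); auto.
      apply is_RInt_zero. intros z Hz1. apply Hz. right. rewrite Rmin_left in Hz1 by lra. lra.
    + apply locally_singleton; auto.
Qed.

Lemma Dn_Derive_n n k U f : Dn (n + k) U f -> Dn n U (Derive_n f k).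
Proof.
  revert n. induction k; intros n D. replace (n + 0)%nat with n in D by lia. auto.
  simpl. replace (n + S k)%nat with (S n + k)%nat in D by lia.
  apply IHk in D. apply DnS in D. apply D.
Qed.

Definition U1 N L := Ioo (s_of_r N 1) (s_of_r N (bL L)).

Lemma U1_pos N L y : U1 N L y -> 0 < y.
Proof. intros [H1 H2]. assert (0 < s_of_r N 1) by apply s_pos. lra. Qed.

Lemma Sm_v_U1 N L : (5 <= N)%nat -> 3 <= L -> Sm (U1 N L) (vfun N L).
Proof.
  intros HN HL n. assert (e1 := expL_gt1 L HL).
  assert (bpos : 1 < bL L) by (unfold bL; assert (exp L < exp (2*L)) by (apply exp_mono; lra); lra).
  apply Dn_ext with (fun s => Phi N L (r_of_s N s)). apply opn_Ioo.
  intros; symmetry; apply v_U1; auto.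
  apply Dn_comp with Rpos. apply opn_Ioo. apply opn_Rpos.
  intros y Hy. destruct (r_of_s_range N 1 (bL L) y HN ltac:(lra) bpos) as [Hr _].
  destruct Hy; lra. unfold Rpos; lra.
  apply Sm_Phi. apply Sm_r; auto; lra.
Qed.

Lemma Sm_rho N L : (5 <= N)%nat -> 3 <= L -> Sm (U1 N L) (rho N).
Proof.
  intros HN HL n. assert (e1 := expL_gt1 L HL).
  assert (bpos : 1 < bL L) by (unfold bL; assert (exp L < exp (2*L)) by (apply exp_mono; lra); lra).
  assert (HU := opn_Ioo (s_of_r N 1) (s_of_r N (bL L))).
  unfold rho. apply Dn_ext with (fun s => (sinh (r_of_s N s) * / s) ^ (2 * (N - 1))); auto.
  apply Dn_pow; auto. apply Dn_mult; auto.
  apply Dn_comp with (fun _ => True); auto. apply opn_True. apply Sm_sinh. apply opn_True.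
  apply Sm_r; auto; lra.
  apply Dn_sub with Rpos. intros; apply (U1_pos N L); auto. apply Sm_inv.
Qed.

Lemma rho_pos N s : 0 < s -> 0 < r_of_s N s -> 0 < rho N s.
Proof. intros. unfold rho. apply pow_lt. apply Rdiv_lt_0_compat; auto. apply sinh_pos; auto. Qed.

Definition F1 N L s := / rho N s * (radial_lap N (vfun N L) s) ^ 2 * s ^ (N - 1).
Definition F2 N L s := rho N s * (vfun N L s) ^ 2 * s ^ (N - 1).
Definition F3 N L s := rho N s / (r_of_s N s) ^ 2 * (vfun N L s) ^ 2 * s ^ (N - 1).

Lemma Sm_F N L : (5 <= N)%nat -> 3 <= L -> Sm (U1 N L) (F1 N L) /\ Sm (U1 N L) (F2 N L) /\ Sm (U1 N L) (F3 N L).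
Proof.
  intros HN HL. assert (e1 := expL_gt1 L HL).
  assert (bpos : 1 < bL L) by (unfold bL; assert (exp L < exp (2*L)) by (apply exp_mono; lra); lra).
  assert (HU : opn (U1 N L)) by apply opn_Ioo.
  assert (rpos : forall y, U1 N L y -> 0 < r_of_s N y).
  { intros y Hy. destruct (r_of_s_range N 1 (bL L) y HN ltac:(lra) bpos) as [Hr _].
    destruct Hy; lra. lra. }
  assert (Dv := Sm_v_U1 N L HN HL). assert (Drho := Sm_rho N L HN HL).
  assert (Dinv : forall n g, Dn n (U1 N L) g -> (forall y, U1 N L y -> 0 < g y) -> Dn n (U1 N L) (fun y => / g y)).
  { intros n g Dg Hg. apply Dn_comp with Rpos; auto. apply opn_Rpos. apply Sm_inv. }
  assert (Did : forall n, Dn n (U1 N L) (fun y => y)) by (intros; apply Dn_id; auto).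
  assert (Dlap : forall n, Dn n (U1 N L) (fun s => radial_lap N (vfun N L) s)).
  { intros n. unfold radial_lap. apply Dn_plus; auto. apply Dn_Derive_n. apply Dv.
    apply Dn_mult; auto. apply Dn_ext with (fun y => (INR N - 1) * / y); auto.
    apply Dn_scal; auto. apply Dinv; auto. intros; apply (U1_pos N L); auto.
    apply (Dn_Derive_n n 1). apply Dv. }
  split; [|split]; intros n.
  - unfold F1. apply Dn_mult; auto. apply Dn_mult; auto. apply Dinv; auto.
    intros; apply rho_pos; auto. apply (U1_pos N L); auto.
    apply Dn_pow; auto. apply Dn_pow; auto.
  - unfold F2. apply Dn_mult; auto. apply Dn_mult; auto. apply Dn_pow; auto. apply Dn_pow; auto.
  - unfold F3. apply Dn_mult; auto. apply Dn_mult; auto.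
    apply Dn_ext with (fun s => rho N s * / (r_of_s N s ^ 2)); auto.
    apply Dn_mult; auto. apply Dinv; auto. apply Dn_pow; auto. apply Sm_r; auto; lra.
    intros; apply pow_lt; auto. apply Dn_pow; auto. apply Dn_pow; auto.
Qed.

Lemma Fint_eq N L A s : Fint N L A s = F1 N L s - (INR N - 1) ^ 4 / 16 * F2 N L s - A * F3 N L s.
Proof. reflexivity. Qed.

Lemma Sm_Fint N L A : (5 <= N)%nat -> 3 <= L -> Sm (U1 N L) (Fint N L A).
Proof.
  intros HN HL n. destruct (Sm_F N L HN HL) as [D1 [D2 D3]].
  assert (HU : opn (U1 N L)) by apply opn_Ioo.
  apply Dn_ext with (fun s => F1 N L s - (INR N - 1) ^ 4 / 16 * F2 N L s - A * F3 N L s); auto.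
  apply Dn_minus; auto. apply Dn_minus; auto. apply Dn_scal; auto. apply Dn_scal; auto.
Qed.

Lemma F_zero N L x : (5 <= N)%nat -> 3 <= L -> U2 N L x -> F1 N L x = 0 /\ F2 N L x = 0 /\ F3 N L x = 0.
Proof.
  intros HN HL Hx.
  assert (HU := opn_U2 N L).
  assert (v0 : vfun N L x = 0) by (apply v_U2; auto).
  assert (loc : locally x (fun t => vfun N L t = 0)).
  { apply loc_eq with (U2 N L); auto. intros; apply v_U2; auto. }
  assert (d1 : Derive (vfun N L) x = 0).
  { rewrite (Derive_ext_loc (vfun N L) (fun _ => 0)); auto. apply Derive_const. }
  assert (d2 : Derive_n (vfun N L) 2 x = 0).
  { rewrite (Derive_n_ext_loc (vfun N L) (fun _ => 0)); auto. apply Derive_n_const. }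
  unfold F1, F2, F3, radial_lap. rewrite v0, d1, d2. repeat split; ring.
Qed.

Lemma sinh_big r : 4 <= r -> 1 <= sinh r /\ r * r ^ 2 / sinh r ^ 2 <= 54.
Proof.
  intros Hr. assert (S1 := sinh_ge r ltac:(lra)).
  assert (e5 : 1 + r < exp r) by (apply exp_ineq1; lra).
  split. lra.
  assert (E3 := exp_ge_pow (2 * r) 3 ltac:(lra) ltac:(lia)).
  replace (2 * r) with (r + r) in E3 by ring. rewrite exp_plus in E3.
  simpl INR in E3. replace (1 + 1 + 1) with 3 in E3 by ring.
  set (E := exp r) in *.
  assert (sh2 : E * E / 16 <= sinh r ^ 2) by nra.
  assert (E2 : 8 * r ^ 3 / 27 <= E * E) by (replace (8 * r ^ 3 / 27) with (((r + r) / 3) ^ 3) by field; lra).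
  assert (shp : 0 < sinh r ^ 2) by nra.
  apply Rmult_le_reg_r with (sinh r ^ 2); auto. unfold Rdiv. rewrite Rmult_assoc, Rinv_l by lra. nra.
Qed.

Lemma Dn1_s N : (5 <= N)%nat -> Dn 1 Rpos (s_of_r N).
Proof.
  intros HN. apply DnS. split. intros x Hx. eexists. apply s_der; auto. apply Dn_0.
Qed.

Lemma Sf_der N L t : (5 <= N)%nat -> is_derive (Sf N L) t (Sd N L t).
Proof.
  intros HN.
  assert (Dg : is_derive (fun t => exp (L * t)) t (L * exp (L * t))) by (auto_derive; auto; ring).
  assert (H := is_derive_comp (s_of_r N) (fun t => exp (L * t)) t ((s_of_r N (exp (L*t)) / sinh (exp (L*t)))^(N-1)) (L * exp (L * t))
     (s_der N (exp (L * t)) HN (exp_pos _)) Dg).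
  unfold Sd, Sf. replace ((s_of_r N (exp (L * t)) / sinh (exp (L * t))) ^ (N - 1) * (L * exp (L * t)))
    with (scal (L * exp (L * t)) ((s_of_r N (exp (L*t)) / sinh (exp (L*t)))^(N-1))) by (unfold scal; simpl; unfold mult; simpl; ring).
  exact H.
Qed.

Lemma Sd_cont N L t : (5 <= N)%nat -> continuous (Sd N L) t.
Proof.
  intros HN. assert (HT := opn_True).
  assert (D : Dn 1 (fun _ => True) (Sd N L)).
  { unfold Sd. assert (De : Dn 1 (fun _ => True) (fun t => exp (L * t))).
    { apply Dn_comp with (fun _ => True); auto. apply Sm_exp; auto. apply Dn_scal; auto. apply Dn_id; auto. }
    apply Dn_mult; auto. apply Dn_pow; auto.
    apply Dn_ext with (fun t => Sf N L t * / sinh (exp (L * t))); auto.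
    apply Dn_mult; auto. unfold Sf. apply Dn_comp with Rpos; auto. apply opn_Rpos.
    intros; apply exp_pos. apply Dn1_s; auto.
    apply Dn_comp with Rpos; auto. apply opn_Rpos. intros; apply sinh_pos; apply exp_pos. apply Sm_inv.
    apply Dn_comp with Rpos; auto. apply opn_Rpos. intros; apply exp_pos. apply Sm_sinh. apply opn_Rpos.
    apply Dn_scal; auto. }
  apply (Dn_cont 1 0 (fun _ => True) (Sd N L) t HT D); auto.
Qed.

Lemma P0_t L t : 0 < L -> P0 L (exp (L * t)) = psi t.
Proof. intros. unfold P0. rewrite ln_exp. f_equal. field. lra. Qed.
Lemma P2_t L t : 0 < L -> P2 L (exp (L * t)) = Derive (Derive psi) t.
Proof. intros. unfold P2. rewrite ln_exp. f_equal. field. lra. Qed.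

Lemma psi_cont t : continuous psi t.
Proof. apply (Dn_cont 1 0 (fun _ => True) psi t opn_True); auto. apply Sm_psi, opn_True. Qed.
Lemma psi2_cont t : continuous (Derive (Derive psi)) t.
Proof. apply (Dn_cont 3 2 (fun _ => True) psi t opn_True); auto. apply Sm_psi, opn_True. Qed.

Lemma Gf_le N L A t : (5 <= N)%nat -> 3 <= L -> 1 <= t ->
  Gf N L A t <= L * (mN N ^ 2 / 2 - A) * psi t ^ 2 + Dc (mN N) * (psi t ^ 2 + Derive (Derive psi) t ^ 2).
Proof.
  intros HN HL Ht. unfold Gf. rewrite <- (P0_t L t), <- (P2_t L t) by lra.
  set (r := exp (L * t)).
  assert (r1 : 1 + L <= r).
  { assert (1 + L < exp L) by (apply exp_ineq1; lra).
    assert (exp L <= r). { unfold r. destruct (Req_dec t 1). subst; rewrite Rmult_1_r; lra.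
      left; apply exp_mono; nra. } lra. }
  destruct (sinh_big r ltac:(lra)) as [sh1 sh54].
  assert (m2 : 2 <= mN N) by (unfold mN; apply le_INR in HN; simpl in HN; lra).
  replace (INR N - 1) with (2 * mN N) by (unfold mN; field).
  apply (Gbound (mN N) A L r (P0 L r) (P2 L r) (sinh r)); auto.
  apply Rle_trans with (r * r ^ 2 / sinh r ^ 2); auto.
  unfold Rdiv. apply Rmult_le_compat_r. left; apply Rinv_0_lt_compat; nra.
  apply Rmult_le_compat_r. nra. lra.
Qed.

Lemma is_RInt_R (f : R -> R) a b : ex_RInt f a b -> is_RInt f a b (RInt f a b).
Proof. apply (RInt_correct (V:=R_CompleteNormedModule)). Qed.

Lemma cont_exRInt (f : R -> R) a b : (forall z, Rmin a b <= z <= Rmax a b -> continuous f z) -> ex_RInt f a b.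
Proof. intros H. apply (ex_RInt_continuous (V:=R_CompleteNormedModule)). exact H. Qed.

Theorem proposition6p6 (N : nat) (HN : (5 <= N)%nat) (A : R)
  (Hineq : forall v : R -> R, smooth_cc_pos v ->
     int_0_oo (fun s => / rho N s * (radial_lap N v s) ^ 2 * s ^ (N - 1))
     >= (INR N - 1) ^ 4 / 16 * int_0_oo (fun s => rho N s * (v s) ^ 2 * s ^ (N - 1))
        + A * int_0_oo (fun s => rho N s / (r_of_s N s) ^ 2 * (v s) ^ 2 * s ^ (N - 1))) :
  A <= (INR N - 1) ^ 2 / 8.
Proof.
  destruct (Rle_dec A ((INR N - 1) ^ 2 / 8)) as [H|H]; auto. exfalso. apply Rnot_le_lt in H.
  assert (m2 : 2 <= mN N) by (unfold mN; apply le_INR in HN; simpl in HN; lra).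
  assert (Hm : (INR N - 1) ^ 2 / 8 = mN N ^ 2 / 2) by (unfold mN; field).
  rewrite Hm in H.
  set (m := mN N) in *.
  assert (Ex1 : ex_RInt (fun t => psi t ^ 2) 1 2).
  { apply cont_exRInt. intros z _. apply (Dn_cont 1 0 (fun _ => True) (fun t => psi t ^ 2) z opn_True); auto.
    apply Dn_pow. apply opn_True. apply Sm_psi, opn_True. }
  assert (Ex5 : ex_RInt (fun t => Derive (Derive psi) t ^ 2) 1 2).
  { apply cont_exRInt. intros z _. apply (Dn_cont 1 0 (fun _ => True) (fun t => Derive (Derive psi) t ^ 2) z opn_True); auto.
    apply Dn_pow. apply opn_True. apply (Dn_Derive_n 1 2). apply Sm_psi, opn_True. }
  set (K1 := RInt (fun t => psi t ^ 2) 1 2).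
  set (K5 := RInt (fun t => Derive (Derive psi) t ^ 2) 1 2).
  assert (K1p : 0 < K1).
  { apply RInt_gt_0. lra. intros x Hx. apply pow_lt. apply psi_pos; auto.
    intros z _. apply (Dn_cont 1 0 (fun _ => True) (fun t => psi t ^ 2) z opn_True); auto.
    apply Dn_pow. apply opn_True. apply Sm_psi, opn_True. }
  assert (K5p : 0 <= K5).
  { apply RInt_ge_0. lra. auto. intros; apply pow2_ge_0. }
  assert (Dcp : 0 <= Dc m).
  { unfold Dc. assert (0 <= m ^ 2 - m) by nra. assert (0 <= m^2) by nra. nra. }
  assert (Am : 0 < (A - m ^ 2 / 2) * K1) by (apply Rmult_lt_0_compat; lra).
  set (L := 3 + (Dc m * (K1 + K5) + 1) / ((A - m ^ 2 / 2) * K1)).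
  assert (HL : 3 <= L).
  { unfold L. assert (0 <= (Dc m * (K1 + K5) + 1) / ((A - m ^ 2 / 2) * K1)).
    apply Rdiv_le_0_compat; auto. nra. lra. }
  assert (HLb : Dc m * (K1 + K5) + 1 <= L * ((A - m ^ 2 / 2) * K1)).
  { unfold L. rewrite Rmult_plus_distr_r. unfold Rdiv. rewrite Rmult_assoc, Rinv_l by lra. nra. }
  assert (e1 := expL_gt1 L HL).
  assert (e2 : exp L < exp (2 * L)) by (apply exp_mono; lra).
  assert (bpos : exp (2 * L) < bL L) by (unfold bL; lra).
  set (s1 := s_of_r N (exp L)). set (s2 := s_of_r N (exp (2 * L))).
  assert (s1p : 0 < s1) by apply s_pos.
  assert (s12 : s1 < s2) by (apply s_incr; auto; lra).
  assert (inU1 : forall z, s1 <= z <= s2 -> U1 N L z).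
  { intros z Hz. assert (s_of_r N 1 < s1) by (apply s_incr; auto; lra).
    assert (s2 < s_of_r N (bL L)) by (apply s_incr; auto; lra). split; lra. }
  destruct (Sm_F N L HN HL) as [D1 [D2 D3]].
  assert (HU : opn (U1 N L)) by apply opn_Ioo.
  assert (ExF : forall F, Sm (U1 N L) F -> ex_RInt F s1 s2).
  { intros F DF. apply cont_exRInt. intros z Hz. rewrite Rmin_left, Rmax_right in Hz by lra.
    apply (Dn_cont 1 0 (U1 N L) F z HU (DF 1%nat)); auto. }
  assert (Z : forall x, x < s1 \/ s2 < x -> F1 N L x = 0 /\ F2 N L x = 0 /\ F3 N L x = 0).
  { intros x Hx. apply F_zero; auto. }
  assert (I1 : int_0_oo (F1 N L) = RInt (F1 N L) s1 s2).
  { apply int00; auto. intros; apply Z; auto. }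
  assert (I2 : int_0_oo (F2 N L) = RInt (F2 N L) s1 s2).
  { apply int00; auto. intros; apply Z; auto. }
  assert (I3 : int_0_oo (F3 N L) = RInt (F3 N L) s1 s2).
  { apply int00; auto. intros; apply Z; auto. }
  assert (Hv : int_0_oo (F1 N L) >= (INR N - 1) ^ 4 / 16 * int_0_oo (F2 N L) + A * int_0_oo (F3 N L)).
  { exact (Hineq (vfun N L) (v_smooth N L HN HL)). }
  rewrite I1, I2, I3 in Hv.
  set (c := (INR N - 1) ^ 4 / 16) in *.
  assert (IF : is_RInt (Fint N L A) s1 s2 (RInt (F1 N L) s1 s2 - c * RInt (F2 N L) s1 s2 - A * RInt (F3 N L) s1 s2)).
  { apply (is_RInt_ext (V:=R_NormedModule) (fun x => minus (minus (F1 N L x) (scal c (F2 N L x))) (scal A (F3 N L x)))).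
    intros x _. unfold minus, plus, opp, scal; simpl; unfold mult; simpl. rewrite Fint_eq. fold c. ring.
    replace (RInt (F1 N L) s1 s2 - c * RInt (F2 N L) s1 s2 - A * RInt (F3 N L) s1 s2)
      with (minus (minus (RInt (F1 N L) s1 s2) (scal c (RInt (F2 N L) s1 s2))) (scal A (RInt (F3 N L) s1 s2)))
      by (unfold minus, plus, opp, scal; simpl; unfold mult; simpl; ring).
    apply (is_RInt_minus (V:=R_NormedModule)). apply (is_RInt_minus (V:=R_NormedModule)).
    apply is_RInt_R; auto. apply (is_RInt_scal (V:=R_NormedModule)). apply is_RInt_R; auto.
    apply (is_RInt_scal (V:=R_NormedModule)). apply is_RInt_R; auto. }
  assert (Pos : 0 <= RInt (Fint N L A) s1 s2).
  { rewrite (is_RInt_unique _ _ _ _ IF). lra. }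
  assert (Lp : 0 < L) by lra.
  assert (Sfin : forall t, 1 <= t <= 2 -> 1 < exp (L * t) < bL L /\ U1 N L (Sf N L t)).
  { intros t Ht. assert (exp L <= exp (L * t)).
    { destruct (Req_dec t 1). subst; rewrite Rmult_1_r; lra. left; apply exp_mono; nra. }
    assert (exp (L * t) <= exp (2 * L)).
    { destruct (Req_dec t 2). subst; rewrite Rmult_comm; lra. left; apply exp_mono; nra. }
    split. lra. unfold Sf. split; apply s_incr; auto; lra. }
  assert (Sf1 : Sf N L 1 = s1) by (unfold Sf, s1; rewrite Rmult_1_r; auto).
  assert (Sf2 : Sf N L 2 = s2) by (unfold Sf, s2; rewrite Rmult_comm; auto).
  assert (FintC : forall z, U1 N L z -> continuous (Fint N L A) z).
  { intros z Hz. apply (Dn_cont 1 0 (U1 N L) (Fint N L A) z HU); auto. apply Sm_Fint; auto. }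
  assert (Comp : RInt (fun y => scal (Sd N L y) (Fint N L A (Sf N L y))) 1 2 = RInt (Fint N L A) (Sf N L 1) (Sf N L 2)).
  { apply (RInt_comp (V:=R_CompleteNormedModule)).
    intros x Hx. rewrite Rmin_left, Rmax_right in Hx by lra. apply FintC. apply Sfin; auto.
    intros x Hx. split. apply Sf_der; auto. apply Sd_cont; auto. }
  rewrite Sf1, Sf2 in Comp.
  assert (CompG : RInt (fun y => scal (Sd N L y) (Fint N L A (Sf N L y))) 1 2 = RInt (Gf N L A) 1 2).
  { apply (RInt_ext (V:=R_CompleteNormedModule)). intros x Hx. rewrite Rmin_left, Rmax_right in Hx by lra.
    unfold scal; simpl; unfold mult; simpl. apply pointwise; auto. apply Sfin; lra. }
  assert (ExG : ex_RInt (Gf N L A) 1 2).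
  { apply (ex_RInt_ext (V:=R_NormedModule) (fun y => Sd N L y * Fint N L A (Sf N L y))).
    intros x Hx. rewrite Rmin_left, Rmax_right in Hx by lra. apply pointwise; auto. apply Sfin; lra.
    apply cont_exRInt. intros z Hz. rewrite Rmin_left, Rmax_right in Hz by lra.
    apply (continuous_mult (K:=R_AbsRing) (Sd N L) (fun y => Fint N L A (Sf N L y))). apply Sd_cont; auto.
    apply (continuous_comp (Sf N L) (Fint N L A)). apply (ex_derive_continuous (Sf N L)). eexists; apply Sf_der; auto.
    apply FintC. apply Sfin; auto. }
  set (Hf := fun t => L * (m ^ 2 / 2 - A) * psi t ^ 2 + Dc m * (psi t ^ 2 + Derive (Derive psi) t ^ 2)).
  assert (IH : is_RInt Hf 1 2 (L * (m ^ 2 / 2 - A) * K1 + Dc m * (K1 + K5))).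
  { apply (is_RInt_ext (V:=R_NormedModule) (fun t => plus (scal (L * (m ^ 2 / 2 - A)) (psi t ^ 2)) (scal (Dc m) (plus (psi t ^ 2) (Derive (Derive psi) t ^ 2))))).
    intros; unfold Hf, plus, scal; simpl; unfold mult; simpl; ring.
    replace (L * (m ^ 2 / 2 - A) * K1 + Dc m * (K1 + K5)) with (plus (scal (L * (m ^ 2 / 2 - A)) K1) (scal (Dc m) (plus K1 K5)))
      by (unfold plus, scal; simpl; unfold mult; simpl; ring).
    apply (is_RInt_plus (V:=R_NormedModule)). apply (is_RInt_scal (V:=R_NormedModule)). apply is_RInt_R; auto.
    apply (is_RInt_scal (V:=R_NormedModule)). apply (is_RInt_plus (V:=R_NormedModule)); apply is_RInt_R; auto. }
  assert (Le : RInt (Gf N L A) 1 2 <= RInt Hf 1 2).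
  { apply RInt_le; auto. lra. eexists; apply IH. intros x Hx. unfold Hf. apply Gf_le; auto; lra. }
  rewrite (is_RInt_unique _ _ _ _ IH) in Le.
  assert (Eq : RInt (Fint N L A) s1 s2 = RInt (Gf N L A) 1 2) by (rewrite <- Comp; auto).
  nra.
Qed.
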